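(* Let $\mathcal H$ be a non-binary MMP hypergraph of hypergraph-dimension $n\ge 3$ with $k$ vertices and $l$ hyperedges. Then $\mathcal H$ satisfies the v-inequality $$HI_{cm}\le HI_{cM}\le HI^m_{cM}<HI_q=l .$$
   Context: A hypergraph $\mathcal H=(V,E)$ consists of a finite vertex set $V$ and a family $E$ of subsets of $V$ (hyperedges). An MMP hypergraph of hypergraph-dimension $n\ge3$ is a connected hypergraph in which: every vertex belongs to at least one hyperedge; every hyperedge contains at least $2$ and at most $n$ vertices; no hyperedge shares only one vertex with another hyperedge; and any two hyperedges intersect in at most $n-2$ vertices. Consider assignments of values $0$ and $1$ to the vertices and the two rules: (i) no two vertices within any hyperedge are both assigned $1$; (ii) in every hyperedge not all vertices are assigned $0$. $\mathcal H$ is non-binary if no $0$-$1$ assignment satisfies both (i) and (ii), and binary otherwise. The multiplicity $m(v)$ of a vertex is the number of hyperedges containing it. A classical assignment is a $0$-$1$ assignment satisfying rule (i) in which no further vertex can be switched from $0$ to $1$ without violating (i) (for binary hypergraphs this includes the assignments satisfying (i) and (ii)). The classical vertex index $HI_c$ of a classical assignment is the number of vertices assigned $1$; $HI_{cM}$ and $HI_{cm}$ are its maximum and minimum over classical assignments. The classical multiplexed vertex index $HI^m_c$ of a classical assignment is $\sum_{v \text{ assigned } 1} m(v)$, and $HI^m_{cM}$ is its maximum over classical assignments. The quantum hypergraph index $HI_q$ is the sum over all hyperedges $E_j$ of the detection probabilities $1/\kappa(j)$ of each of the $\kappa(j)$ considered vertices of $E_j$ (a vertex in several hyperedges counted once per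 hyperedge); it equals $l$. *)

(* Defs.v *)
From HB Require Import structures.
From mathcomp Require Import all_boot all_order all_algebra.
Set Implicit Arguments. Unset Strict Implicit. Unset Printing Implicit Defensive.
Import Order.TTheory GRing.Theory Num.Theory.

Section Hyp.
Variable V : finType.
Variable E : {set {set V}}.

Definition hadj : rel V := fun x y => [exists e in E, (x \in e) && (y \in e)].

Definition hconnected : Prop := forall u v : V, connect hadj u v.

Definition MMP (n : nat) : Prop :=
  3 <= n /\
  [/\ hconnected,
      (forall v : V, exists2 e, e \in E & v \in e),
      (forall e, e \in E -> 2 <= #|e| <= n),
      (forall e1 e2, e1 \in E -> e2 \in E -> e1 != e2 -> #|e1 :&: e2| != 1) &
      (forall e1 e2, e1 \in E -> e2 \in E -> e1 != e2 -> #|e1 :&: e2| <= n - 2)].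

(* A 0-1 assignment is represented by the set A of vertices assigned 1. *)
Definition rule1 (A : {set V}) : Prop := forall e, e \in E -> #|e :&: A| <= 1.
Definition rule2 (A : {set V}) : Prop := forall e, e \in E -> e :&: A != set0.

Definition non_binary : Prop := ~ exists A : {set V}, rule1 A /\ rule2 A.

Definition classicalb (A : {set V}) : bool :=
  [forall e in E, #|e :&: A| <= 1] &&
  [forall v, (v \notin A) ==> ~~ [forall e in E, #|e :&: (v |: A)| <= 1]].

Definition mult (v : V) : nat := #|[set e in E | v \in e]|.

Definition HIcM : nat := \max_(A : {set V} | classicalb A) #|A|.
Definition HIcm : nat := \big[minn/#|V|]_(A : {set V} | classicalb A) #|A|.
Definition HImcM : nat := \max_(A : {set V} | classicalb A) \sum_(v in A) mult v.
(* quantum index: sum over hyperedges of the detection probabilities 1/|E_j| *)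
Definition HIq : rat := \sum_(e in E) \sum_(v in e) (#|e|%:R)^-1.
End Hyp.

(* Main.v *)
Require Import Defs.
From HB Require Import structures.
From mathcomp Require Import all_boot all_order all_algebra.
From mathcomp Require Import zify.
Import Order.TTheory GRing.Theory Num.Theory.

Section Aux.
Variable V : finType.
Variable E : {set {set V}}.

Lemma r1b (A : {set V}) : [forall e in E, #|e :&: A| <= 1] -> rule1 E A.
Proof. by move=> /forall_inP H e eE; apply: H. Qed.

Lemma classical_exists : exists A, classicalb E A.
Proof.
have P0 : [forall e in E, #|e :&: (set0 : {set V})| <= 1].
  by apply/forall_inP => e _; rewrite setI0 cards0.
case: (@arg_maxnP _ set0 (fun A : {set V} => [forall e in E, #|e :&: A| <= 1]) (fun A : {set V} => #|A|) P0) => A PA Amax.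
exists A; rewrite /classicalb PA /=.
apply/forallP => v; apply/implyP => vA; apply/negP => Hv.
have := Amax _ Hv; rewrite cardsU1 vA /=; lia.
Qed.

Lemma mult_sum (A : {set V}) :
  \sum_(v in A) mult E v = \sum_(e in E) #|e :&: A|.
Proof.
have h1 : forall v, mult E v = \sum_(e in E) (v \in e : nat).
  move=> v; rewrite /mult -sum1_card big_mkcond /= [RHS]big_mkcond /=.
  apply: eq_bigr => e _; rewrite inE; by case: (e \in E); case: (v \in e).
have h2 : forall e, #|e :&: A| = \sum_(v in A) (v \in e : nat).
  move=> e; rewrite -sum1_card big_mkcond /= [RHS]big_mkcond /=.
  apply: eq_bigr => v _; rewrite inE; by case: (v \in e); case: (v \in A).
rewrite (eq_bigr _ (fun v _ => h1 v)) exchange_big /=.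
by apply: eq_bigr => e _; rewrite h2.
Qed.

End Aux.

Lemma bigmin_le (I : eqType) (r : seq I) (P : pred I) (F : I -> nat) x j :
  j \in r -> P j -> (\big[minn/x]_(i <- r | P i) F i <= F j)%N.
Proof.
elim: r => // i r IH; rewrite inE big_cons => /predU1P [-> ->|jr Pj].
  exact: geq_minl.
case: (P i); last exact: IH.
by rewrite (leq_trans (geq_minr _ _)) // IH.
Qed.


Theorem lemma4 (V : finType) (E : {set {set V}}) (n k l : nat) :
  MMP E n -> non_binary E -> #|V| = k -> #|E| = l ->
  [/\ (HIcm E <= HIcM E)%N, (HIcM E <= HImcM E)%N,
      ((HImcM E)%:R < HIq E)%R & HIq E = (l%:R)%R].
Proof.
move=> [n3 [Hc Hcov Hsz Hint1 Hint2]] NB Hk Hl.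
have HIqE : HIq E = (l%:R)%R.
  rewrite /HIq -Hl -sumr_const; apply: eq_bigr => e eE.
  rewrite sumr_const -[LHS]mulr_natl divff // pnatr_eq0.
  by have := Hsz e eE; case: #|e|.
have lpos : (0 < l)%N.
  rewrite -Hl lt0n; apply/negP => /eqP/cards0_eq E0; apply: NB.
  exists set0; split => e; by rewrite E0 inE.
have Hmax : forall A, classicalb E A -> (\sum_(v in A) mult E v < l)%N.
  move=> A /andP [R1 _]; have r1 := @r1b _ E A R1.
  have [e0 e0E e0A] : exists2 e, e \in E & e :&: A = set0.
    case: (boolP [forall e in E, e :&: A != set0]) => H.
      exfalso; apply: NB; exists A; split => //.
      by move=> e eE; move/forall_inP: H; apply.
    move/forall_inPn: H => [e eE]; rewrite negbK => /eqP H.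
    by exists e.
  rewrite mult_sum (bigD1 e0) //= e0A cards0 add0n.
  have : (\sum_(i in E | i != e0) #|i :&: A| <= \sum_(i in E | i != e0) 1)%N.
    by apply: leq_sum => i /andP [iE _]; apply: r1.
  rewrite sum1_card => H1.
  apply: (leq_ltn_trans H1); rewrite -Hl.
    rewrite [X in (_ < X)%N](cardD1 e0) e0E /=.
    suff -> : #|[pred i in E | i != e0]| = #|[predD1 E & e0]| by [].
    by apply: eq_card => i; rewrite !inE andbC.
have [A0 cA0] := @classical_exists _ E.
split.
- rewrite /HIcm /HIcM.
  apply: (leq_trans (n := #|A0|)).
    by apply: bigmin_le; rewrite ?mem_index_enum.
  by apply: (leq_bigmax_cond _ cA0).
- rewrite /HIcM /HImcM; apply/bigmax_leqP => A cA.
  apply: (leq_trans _ (leq_bigmax_cond _ cA)).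
  rewrite -sum1_card; apply: leq_sum => v _.
  have [e eE ve] := Hcov v; rewrite /mult card_gt0; apply/set0Pn.
  by exists e; rewrite inE eE ve.
- rewrite HIqE ltr_nat /HImcM.
  have : (\max_(A | classicalb E A) \sum_(v in A) mult E v <= l.-1)%N.
    apply/bigmax_leqP => A cA; have := Hmax A cA; lia.
  move=> H; apply: (leq_ltn_trans H); by rewrite prednK.
- exact HIqE.
Qed.
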